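(* If the filtered vector space $(V,\ell)$ satisfies the best approximation property, then every subspace $W\le V$ has an $\ell$-orthogonal complement, i.e. a subspace $X\le V$ with $W\oplus X=V$ and $\ell(w+x)=\max\{\ell(w),\ell(x)\}$ for all $w\in W$, $x\in X$.
   Context: A filtered vector space over a field $\kappa$ is a pair $(V,\ell)$ with $V$ a $\kappa$-vector space and $\ell\colon V\to\mathbb{R}\cup\{-\infty\}$ such that $\ell(v)=-\infty$ iff $v=0$, $\ell(cv)=\ell(v)$ for $c\in\kappa\setminus\{0\}$, and $\ell(v+w)\le\max\{\ell(v),\ell(w)\}$. $(V,\ell)$ satisfies the best approximation property if for every proper subspace $W\subsetneq V$ and every $v\in V\setminus W$ there is $w_0\in W$ with $\ell(v-w_0)\le\ell(v-w)$ for all $w\in W$. *)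

(* Defs.v *)
From HB Require Import structures.
From mathcomp Require Import all_boot all_order all_algebra.
From mathcomp Require Import boolp reals constructive_ereal.
Set Implicit Arguments. Unset Strict Implicit. Unset Printing Implicit Defensive.
Import Order.TTheory GRing.Theory Num.Theory.
Local Open Scope ring_scope.
Local Open Scope ereal_scope.

Definition subspace (K : fieldType) (V : lmodType K) (W : V -> Prop) : Prop :=
  W 0%R /\ (forall (a : K) (u v : V), W u -> W v -> W (a *: u + v)%R).

Definition filtered (K : fieldType) (V : lmodType K) (R : realType)
    (l : V -> \bar R) : Prop :=
  [/\ (forall v, l v != +oo),
      (forall v, l v = -oo <-> v = 0%R),
      (forall (c : K) (v : V), c != 0%R -> l (c *: v)%R = l v)
    & (forall v w, l (v + w)%R <= maxe (l v) (l w))].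

Definition best_approx (K : fieldType) (V : lmodType K) (R : realType)
    (l : V -> \bar R) : Prop :=
  forall W : V -> Prop, subspace W -> (exists v, ~ W v) ->
  forall v, ~ W v ->
  exists w0, W w0 /\ forall w, W w -> l (v - w0)%R <= l (v - w)%R.

Definition orth_complement (K : fieldType) (V : lmodType K) (R : realType)
    (l : V -> \bar R) (W X : V -> Prop) : Prop :=
  [/\ subspace X,
      (forall v, exists w x, [/\ W w, X x & v = (w + x)%R]),
      (forall v, W v -> X v -> v = 0%R)
    & (forall w x, W w -> X x -> l (w + x)%R = maxe (l w) (l x))].

(* Main.v *)
Require Import Defs.
From HB Require Import structures.
From mathcomp Require Import all_boot all_order all_algebra.
From mathcomp Require Import boolp reals constructive_ereal.
From mathcomp Require Import classical_sets.
Set Implicit Arguments. Unset Strict Implicit. Unset Printing Implicit Defensive.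
Import Order.TTheory GRing.Theory Num.Theory.
Local Open Scope classical_set_scope.
Local Open Scope ereal_scope.

Section S.
Variables (K : fieldType) (V : lmodType K) (R : realType) (l : V -> \bar R).
Hypothesis hf : filtered l.

Lemma lZ c v : c != 0%R -> l (c *: v)%R = l v.
Proof. by case: hf => _ _ hs _; apply: hs. Qed.

Lemma lN v : l (- v)%R = l v.
Proof. by rewrite -scaleN1r lZ // oppr_eq0 oner_eq0. Qed.

Lemma lD v w : l (v + w)%R <= maxe (l v) (l w).
Proof. by case: hf. Qed.

Lemma l0 : l 0%R = -oo.
Proof. by case: hf => _ h _ _; apply: (h 0%R).2. Qed.

Lemma l_eq0 v : l v = -oo -> v = 0%R.
Proof. by case: hf => _ h _ _; apply: (h v).1. Qed.

Lemma orth_max (W : V -> Prop) x w : subspace W ->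
  (forall w, W w -> l x <= l (x + w)%R) -> W w ->
  l (w + x)%R = maxe (l w) (l x).
Proof.
move=> [W0 Wc] hx Ww.
have WN : W (- w)%R by have := Wc (-1)%R w 0%R Ww W0; rewrite addr0 scaleN1r.
apply/eqP; rewrite eq_le lD /= ge_max (addrC w) hx // andbT.
have e : w = ((x + w) - x)%R by rewrite addrC addKr.
rewrite {1}e; apply: le_trans (lD _ _) _.
by rewrite lN ge_max lexx /= hx.
Qed.

End S.

Theorem corollary3p9 (K : fieldType) (V : lmodType K) (R : realType)
    (l : V -> \bar R) :
  filtered l -> best_approx l ->
  forall W : V -> Prop, subspace W -> exists X : V -> Prop, orth_complement l W X.
Proof.
move=> hf hb W sW.
have [W0 Wc] := sW.
have WN : forall w, W w -> W (- w)%R.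
  by move=> w Ww; have := Wc (-1)%R w 0%R Ww W0; rewrite addr0 scaleN1r.
pose P := fun X : set V => (forall a u v, X u -> X v -> X (a *: u + v)%R) /\
   (forall x w, X x -> W w -> l x <= l (x + w)%R).
have [A [[Ac Ao] Amax]] : exists A, P A /\ forall B, A `<` B -> ~ P B.
  apply: Zorn_bigcup => F FP Ftot; split.
  - move=> a u v [X1 FX1 X1u] [X2 FX2 X2v].
    have [s12|s21] := Ftot _ _ FX1 FX2.
    + by exists X2 => //; apply: (FP _ FX2).1 => //; exact: s12.
    + by exists X1 => //; apply: (FP _ FX1).1 => //; exact: s21.
  - by move=> x w [X FX Xx] Ww; exact: (FP _ FX).2.
have A0 : A 0%R.
  have [[a Aa]|nA] := pselect (exists a, A a).
    by have := Ac (-1)%R a a Aa Aa; rewrite scaleN1r addNr.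
  exfalso; apply: (Amax [set 0%R]).
    split; first by move=> a Aa; exfalso; apply nA; exists a.
    by move=> h; apply: nA; exists 0%R; exact: h.
  split; first by move=> a u v /= -> ->; rewrite scaler0 addr0.
  by move=> x w /= -> _; rewrite l0 //; exact: leNye.
exists A; split.
- by split => //.
- move=> v.
  have [//|nv] := pselect (exists w x, [/\ W w, A x & v = (w + x)%R]).
  exfalso.
  pose S := fun y => exists w x, [/\ W w, A x & y = (w + x)%R].
  have Sc : forall a u v, S u -> S v -> S (a *: u + v)%R.
    move=> a u1 u2 [w [x [Ww Ax ->]]] [w' [x' [Ww' Ax' ->]]].
    exists (a *: w + w')%R, (a *: x + x')%R; split; [exact: Wc|exact: Ac|].
    by rewrite scalerDr addrACA.
  have S0 : S 0%R by exists 0%R, 0%R; rewrite addr0.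
  have SD : forall u v, S u -> S v -> S (u + v)%R.
    by move=> u1 u2 h1 h2; have := Sc 1%R u1 u2 h1 h2; rewrite scale1r.
  have SN : forall u, S u -> S (- u)%R.
    by move=> u h; have := Sc (-1)%R u 0%R h S0; rewrite addr0 scaleN1r.
  have [u0 [Su0 hmin]] := hb S (conj S0 Sc) (ex_intro _ v nv) v nv.
  pose v' := (v - u0)%R.
  have nv' : ~ S v'.
    by move=> h; apply: nv; have := SD _ _ h Su0; rewrite /v' subrK.
  have hv' : forall y, S y -> l v' <= l (v' + y)%R.
    move=> y Sy; have := hmin (u0 - y)%R (SD _ _ Su0 (SN _ Sy)).
    by rewrite /v' opprB addrA addrAC.
  pose X' := fun z => exists x c, A x /\ z = (x + c *: v')%R.
  apply: (Amax X').
    split; first by move=> x Ax; exists x, 0%R; rewrite scale0r addr0.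
    move=> h; apply: nv'.
    have : A v' by apply: h; exists 0%R, 1%R; rewrite add0r scale1r.
    by move=> Av; exists 0%R, v'; rewrite add0r.
  split.
    move=> a u1 u2 [x [c [Ax ->]]] [x' [c' [Ax' ->]]].
    exists (a *: x + x')%R, (a * c + c')%R; split; first exact: Ac.
    by rewrite scalerDr scalerA addrACA -scalerDl.
  move=> z w [x [c [Ax ->]]] Ww.
  have [->|c0] := eqVneq c 0%R; first by rewrite scale0r addr0; exact: Ao.
  set T := l (x + c *: v' + w)%R.
  have h1 : l v' <= T.
    rewrite /T -(lZ hf (x + c *: v' + w)%R (invr_neq0 c0)).
    have -> : (c^-1 *: (x + c *: v' + w) = v' + c^-1 *: (x + w))%R.
      by rewrite addrAC scalerDr scalerA mulVf // scale1r; exact: addrC.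
    apply: hv'; exists (c^-1 *: w)%R, (c^-1 *: x)%R; split.
    - by have := Wc (c^-1)%R w 0%R Ww W0; rewrite addr0.
    - by have := Ac (c^-1)%R x 0%R Ax A0; rewrite addr0.
    - by rewrite scalerDr addrC.
  have h2 : l x <= T.
    apply: le_trans (Ao _ _ Ax Ww) _.
    have -> : (x + w = (x + c *: v' + w) - c *: v')%R.
      by rewrite addrAC addrK.
    apply: le_trans (lD hf _ _) _.
    by rewrite lN // lZ // ge_max lexx.
  apply: le_trans (lD hf _ _) _.
  by rewrite lZ // ge_max h1 h2.
- move=> v Wv Av; apply: (l_eq0 hf).
  have := Ao _ _ Av (WN _ Wv); rewrite subrr l0 //.
  by move=> h; apply/le_anti; rewrite h leNye.
- by move=> w x Ww Ax; apply: (orth_max hf sW) => // w' Ww'; exact: Ao.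
Qed.
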